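(* Let $x\in\{0,1\}^\infty$ have randomness rate $\tau>0$, let $0<\sigma<\tau$, let $0<\sigma'<\tau-\sigma$, and let $b=\lceil (1-\sigma)/\sigma'\rceil$. Let $a$ be a sufficiently large positive integer, and define $t_0=0$, $t_1=a$, and $t_i=b(t_1+\cdots+t_{i-1})$ for $i\ge2$. Put $x_i=x(t_{i-1}+1:t_i)$, $n_i=|x_i|=t_i-t_{i-1}$, and $\bar{x}_i=x_1x_2\cdots x_i=x(1:t_i)$ for $i\ge1$. Then: (1) $K(x_i\mid\bar{x}_{i-1})>\sigma n_i$ for all $i\ge2$; (2) $\log|x_i|=\Theta(i)$ and $\log|\bar{x}_i|=\Theta(i)$ as $i\to\infty$.
   Context: $x(n_1:n_2)$ denotes bits $n_1$ through $n_2$ of $x$ (indexed from 1); juxtaposition is concatenation. $K(u)$ and $K(u\mid v)$ denote plain and conditional plain Kolmogorov complexity with respect to fixed universal machines. A sequence $x$ has randomness rate $\tau$ if $K(x(1:n))\ge\tau n$ for all but finitely many $n$. ''Sufficiently large'' means: there is $a_0$ (depending on $x,\tau,\sigma,\sigma'$) such that the conclusion holds for every $a\ge a_0$. *)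

(* Defs.v *)
From Stdlib Require Import Reals Lra Lia List.
Import ListNotations.
Open Scope R_scope.

Inductive code : Type :=
| CZero : code
| CSucc : code
| CProj : nat -> code               (* i-th argument (0-indexed) *)
| CComp : code -> list code -> code
| CPrec : code -> code -> code      (* primitive recursion on the first argument *)
| CMu   : code -> code.             (* minimisation on the first argument *)

Inductive eval : code -> list nat -> nat -> Prop :=
| eZero v : eval CZero v 0
| eSucc x v : eval CSucc (x :: v) (S x)
| eProj i v : (i < length v)%nat -> eval (CProj i) v (nth i v 0%nat)
| eComp f gs v ws y : evals gs v ws -> eval f ws y -> eval (CComp f gs) v y
| ePrec0 f g v y : eval f v y -> eval (CPrec f g) (0%nat :: v) y
| ePrecS f g n v r y :
    eval (CPrec f g) (n :: v) r -> eval g (n :: r :: v) y ->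
    eval (CPrec f g) (S n :: v) y
| eMu f v n :
    eval f (n :: v) 0 ->
    (forall m, (m < n)%nat -> exists k, eval f (m :: v) (S k)) ->
    eval (CMu f) v n
with evals : list code -> list nat -> list nat -> Prop :=
| esNil v : evals [] v []
| esCons g gs v w ws : eval g v w -> evals gs v ws -> evals (g :: gs) v (w :: ws).

(* bijective encoding of binary strings as natural numbers *)
Fixpoint enc (s : list bool) : nat :=
  match s with
  | [] => 0%nat
  | b :: s' => S (2 * enc s' + (if b then 1 else 0))
  end.

Definition runs1 (M : code) (p x : list bool) : Prop := eval M [enc p] (enc x).

Definition runs2 (M : code) (p y x : list bool) : Prop := eval M [enc p; enc y] (enc x).

Definition universal1 (U : code) : Prop :=
  forall M : code, exists c : nat, forall p x, runs1 M p x ->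
    exists q, runs1 U q x /\ (length q <= length p + c)%nat.

Definition universal2 (U : code) : Prop :=
  forall M : code, exists c : nat, forall p y x, runs2 M p y x ->
    exists q, runs2 U q y x /\ (length q <= length p + c)%nat.

(* Plain complexity K_U(x) = min { |p| : U(p) = x } (= +oo if empty).
   [r <= K U x]  and  [r < K(x|y)] written out over descriptions. *)
Definition K_ge (U : code) (x : list bool) (r : R) : Prop :=
  forall p, runs1 U p x -> r <= INR (length p).

Definition Kc_gt (U : code) (x y : list bool) (r : R) : Prop :=
  forall p, runs2 U p y x -> r < INR (length p).

(* x : infinite binary sequence, bit number k (indexed from 1) is x (k-1).
   seg x n1 n2 = x(n1:n2) = bits n1..n2 *)
Definition seg (x : nat -> bool) (n1 n2 : nat) : list bool :=
  map (fun k => x (k - 1)%nat) (seq n1 (n2 + 1 - n1)).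

Definition has_rate (U : code) (x : nat -> bool) (tau : R) : Prop :=
  exists N : nat, forall n : nat, (N <= n)%nat -> K_ge U (seg x 1 n) (tau * INR n).

(* Main.v *)
Require Import Defs.
From Stdlib Require Import Reals List.
Open Scope R_scope.
From Stdlib Require Import Lra Lia Arith ZArith.
Import ListNotations.
Section Mach.
Local Open Scope nat_scope.
Lemma comp1 f g v w y : eval g v w -> eval f [w] y -> eval (CComp f [g]) v y.
Proof. intros. econstructor; [econstructor; [eassumption| constructor] | eassumption]. Qed.
Lemma comp2 f g1 g2 v w1 w2 y : eval g1 v w1 -> eval g2 v w2 -> eval f [w1;w2] y -> eval (CComp f [g1;g2]) v y.
Proof. intros. econstructor; [econstructor; [eassumption| econstructor; [eassumption|constructor]] | eassumption]. Qed.
Lemma proj_ok i v y : (i < length v)%nat -> nth i v 0%nat = y -> eval (CProj i) v y.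
Proof. intros H <-. constructor; auto. Qed.
Ltac pj := apply proj_ok; simpl; [lia|reflexivity].

Fixpoint m2 n := match n with 0 => 0 | S n => 1 - m2 n end.
Fixpoint d2 n := match n with 0 => 0 | S n => d2 n + m2 n end.
Definition tlf n := d2 (Nat.pred n).
Fixpoint dropf j N := match j with 0 => N | S j => tlf (dropf j N) end.
Definition bitf j N := m2 (Nat.pred (dropf j N)).
Fixpoint Ls k N := match k with 0 => 0 | S k => Ls k N + S (bitf (k+k) N) * 2^k end.
Definition Pf k N := bitf (k+k) N + (1 - bitf (S (k+k)) N).

Definition c_one := CComp CSucc [CZero].
Definition c_add := CPrec (CProj 0) (CComp CSucc [CProj 1]).
Definition c_mul := CPrec CZero (CComp c_add [CProj 1; CProj 2]).
Definition c_pred := CPrec CZero (CProj 0).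
Definition c_subr := CPrec (CProj 0) (CComp c_pred [CProj 1]).
Definition c_sub := CComp c_subr [CProj 1; CProj 0].
Definition c_mod2 := CPrec CZero (CComp c_sub [c_one; CProj 1]).
Definition c_div2 := CPrec CZero (CComp c_add [CProj 1; CComp c_mod2 [CProj 0]]).
Definition c_tl := CComp c_div2 [CComp c_pred [CProj 0]].
Definition c_drop := CPrec (CProj 0) (CComp c_tl [CProj 1]).
Definition c_bit := CComp c_mod2 [CComp c_pred [c_drop]].
Definition c_pow2 := CPrec c_one (CComp c_add [CProj 1; CProj 1]).
Definition c_dbl := CComp c_add [CProj 0; CProj 0].
Definition c_Ls := CPrec CZero (CComp c_add [CProj 1; CComp c_mul
   [CComp CSucc [CComp c_bit [CComp c_dbl [CProj 0]; CProj 2]]; CComp c_pow2 [CProj 0]]]).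
Definition c_P := CComp c_add [CComp c_bit [c_dbl; CProj 1];
   CComp c_sub [c_one; CComp c_bit [CComp CSucc [c_dbl]; CProj 1]]].

Lemma one_ok v : eval c_one v 1.
Proof. eapply comp1. constructor. constructor. Qed.
Lemma add_ok a b v : eval c_add (a::b::v) (a+b).
Proof. induction a; simpl.
- apply ePrec0; pj.
- eapply ePrecS. apply IHa. eapply comp1. pj. constructor. Qed.
Lemma mul_ok a b v : eval c_mul (a::b::v) (a*b).
Proof. induction a.
- apply ePrec0; constructor.
- replace (S a * b) with (a*b+b) by lia. eapply ePrecS. apply IHa.
  eapply comp2; [pj|pj|apply add_ok]. Qed.
Lemma pred_ok a v : eval c_pred (a::v) (Nat.pred a).
Proof. induction a; simpl. apply ePrec0; constructor.
 eapply ePrecS. apply IHa. pj. Qed.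
Lemma subr_ok b a v : eval c_subr (b::a::v) (a-b).
Proof. induction b.
- rewrite Nat.sub_0_r. apply ePrec0; pj.
- replace (a - S b) with (Nat.pred (a-b)) by lia. eapply ePrecS. apply IHb.
  eapply comp1. pj. apply pred_ok. Qed.
Lemma sub_ok a b v : eval c_sub (a::b::v) (a-b).
Proof. eapply comp2; [pj|pj|apply subr_ok]. Qed.
Lemma mod2_ok a v : eval c_mod2 (a::v) (m2 a).
Proof. induction a. apply ePrec0; constructor.
 eapply ePrecS. apply IHa. eapply comp2; [apply one_ok|pj|apply sub_ok]. Qed.
Lemma div2_ok a v : eval c_div2 (a::v) (d2 a).
Proof. induction a. apply ePrec0; constructor.
 eapply ePrecS. apply IHa. eapply comp2; [pj| |apply add_ok].
 eapply comp1; [pj|apply mod2_ok]. Qed.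
Lemma tl_ok a v : eval c_tl (a::v) (tlf a).
Proof. eapply comp1; [|apply div2_ok]. eapply comp1; [pj|apply pred_ok]. Qed.
Lemma drop_ok j N v : eval c_drop (j::N::v) (dropf j N).
Proof. induction j. apply ePrec0; pj.
 eapply ePrecS. apply IHj. eapply comp1; [pj|apply tl_ok]. Qed.
Lemma bit_ok j N v : eval c_bit (j::N::v) (bitf j N).
Proof. eapply comp1; [|apply mod2_ok]. eapply comp1; [apply drop_ok|apply pred_ok]. Qed.
Lemma pow2_ok n v : eval c_pow2 (n::v) (2^n).
Proof. induction n. apply ePrec0; apply one_ok.
 replace (2 ^ S n) with (2^n + 2^n) by (simpl; lia). eapply ePrecS. apply IHn.
 eapply comp2; [pj|pj|apply add_ok]. Qed.
Lemma dbl_ok k v : eval c_dbl (k::v) (k+k).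
Proof. eapply comp2; [pj|pj|apply add_ok]. Qed.
Lemma Ls_ok k N v : eval c_Ls (k::N::v) (Ls k N).
Proof. induction k. apply ePrec0; constructor.
 eapply ePrecS. apply IHk. eapply comp2; [pj| |apply add_ok].
 eapply comp2; [| |apply mul_ok].
 - eapply comp1; [|constructor]. eapply comp2; [|pj|apply bit_ok].
   eapply comp1; [pj|apply dbl_ok].
 - eapply comp1; [pj|apply pow2_ok]. Qed.
Lemma P_ok k N v : eval c_P (k::N::v) (Pf k N).
Proof. eapply comp2; [| |apply add_ok].
 - eapply comp2; [apply dbl_ok|pj|apply bit_ok].
 - eapply comp2; [apply one_ok| |apply sub_ok].
   eapply comp2; [|pj|apply bit_ok]. eapply comp1; [apply dbl_ok|constructor]. Qed.

Lemma m2d2 e r : r <= 1 -> m2 (2*e + r) = r /\ d2 (2*e+r) = e.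
Proof. intro Hr. induction e.
- destruct r as [|[|]]; simpl; try lia; auto.
- replace (2 * S e + r) with (S (S (2*e+r))) by lia. cbn [m2 d2]. destruct IHe as [A B].
  rewrite A, B. lia. Qed.

Lemma tlf_enc b s : tlf (enc (b::s)) = enc s.
Proof. unfold tlf. cbn [enc Nat.pred]. destruct b; apply m2d2; lia. Qed.
Lemma bit_cons b s : m2 (Nat.pred (enc (b::s))) = if b then 1 else 0.
Proof. cbn [enc Nat.pred]. destruct b; apply m2d2; lia. Qed.

Lemma skipn_S' {A} j (s : list A) : skipn (S j) s = tl (skipn j s).
Proof. revert j; induction s; intros [|j]; try reflexivity. exact (IHs j). Qed.

Lemma dropf_enc j s : dropf j (enc s) = enc (skipn j s).
Proof. induction j. reflexivity. cbn [dropf]. rewrite IHj, skipn_S'.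
 destruct (skipn j s) as [|c t]; simpl. reflexivity. apply tlf_enc. Qed.

Definition hbit (s : list bool) := match s with b::_ => if b then 1 else 0 | [] => 0 end.
Lemma bitf_enc j s : bitf j (enc s) = hbit (skipn j s).
Proof. unfold bitf. rewrite dropf_enc. destruct (skipn j s); [reflexivity|]. apply bit_cons. Qed.

Lemma enc_app s t : enc (s ++ t) = enc s + 2^(length s) * enc t.
Proof. induction s; simpl. lia. rewrite IHs. destruct a; nia. Qed.

Definition dbl (w : list bool) := flat_map (fun b => [b;b]) w.
Definition cw w := dbl w ++ [false;true].

Lemma skipn_dbl j w rest : j <= length w -> skipn (j+j) (dbl w ++ rest) = dbl (skipn j w) ++ rest.
Proof. revert j; induction w; intros j Hj; destruct j; simpl in *; auto; try lia.
 rewrite Nat.add_succ_r. simpl. apply IHw. lia. Qed.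

Definition M U2 :=
  let ck := CMu c_P in
  let L := CComp c_Ls [ck; CProj 0] in
  let R := CComp c_drop [CComp CSucc [CComp CSucc [CComp c_dbl [ck]]]; CProj 0] in
  let P' := CComp c_drop [L; R] in
  let Y := CComp c_sub [R; CComp c_mul [CComp c_pow2 [L]; P']] in
  let Out := CComp U2 [P'; Y] in
  CComp c_add [Y; CComp c_mul [CComp c_pow2 [L]; Out]].

Lemma Ls_dbl w rest : Ls (length w) (enc (dbl w ++ rest)) = enc w.
Proof. revert rest. induction w as [|c w' IH] using rev_ind; intro rest. reflexivity.
 rewrite length_app. simpl length. rewrite Nat.add_1_r. simpl Ls.
 unfold dbl at 1. rewrite flat_map_app. fold (dbl w'). rewrite <- app_assoc.
 rewrite IH. rewrite bitf_enc. rewrite skipn_dbl. 2: rewrite length_app; lia.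
 rewrite skipn_app, skipn_all, Nat.sub_diag. rewrite enc_app. simpl. destruct c; lia. Qed.

Lemma M_ok U2 w y p' x' : enc w = length y -> eval U2 [enc p'; enc y] (enc x') ->
  eval (M U2) [enc (cw w ++ y ++ p')] (enc (y ++ x')).
Proof. intros Hw HU. set (s := cw w ++ y ++ p'). set (N := enc s).
 assert (Hk : eval (CMu c_P) [N] (length w)).
 { constructor.
   - replace 0 with (Pf (length w) N). apply P_ok.
     unfold Pf, N, s, cw. rewrite !bitf_enc, skipn_S', <- app_assoc, skipn_dbl, skipn_all by lia.
     reflexivity.
   - intros m Hm. exists 0. replace 1 with (Pf m N). apply P_ok.
     unfold Pf, N, s, cw. rewrite !bitf_enc, skipn_S', <- app_assoc, skipn_dbl by lia.
     destruct (skipn m w) eqn:E. apply (f_equal (@length _)) in E. rewrite length_skipn in E. simpl in E; lia.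
     simpl. destruct b; reflexivity. }
 assert (HL : eval (CComp c_Ls [CMu c_P; CProj 0]) [N] (length y)).
 { eapply comp2; [apply Hk|pj|]. replace (length y) with (Ls (length w) N). apply Ls_ok.
   unfold N, s, cw. rewrite <- app_assoc, Ls_dbl; auto. }
 assert (HR : eval (CComp c_drop [CComp CSucc [CComp CSucc [CComp c_dbl [CMu c_P]]]; CProj 0]) [N] (enc (y ++ p'))).
 { eapply comp2; [| pj |].
   - eapply comp1; [|constructor]. eapply comp1; [|constructor]. eapply comp1; [apply Hk|apply dbl_ok].
   - replace (enc (y ++ p')) with (dropf (S (S (length w + length w))) N). apply drop_ok.
     unfold N, s, cw. rewrite dropf_enc, !skipn_S', <- app_assoc, skipn_dbl, skipn_all by lia. reflexivity. }
 assert (HP : eval (CComp c_drop [CComp c_Ls [CMu c_P; CProj 0];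
     CComp c_drop [CComp CSucc [CComp CSucc [CComp c_dbl [CMu c_P]]]; CProj 0]]) [N] (enc p')).
 { eapply comp2; [apply HL|apply HR|]. replace (enc p') with (dropf (length y) (enc (y ++ p'))). apply drop_ok.
   rewrite dropf_enc, skipn_app, skipn_all, Nat.sub_diag. reflexivity. }
 assert (HY : eval (CComp c_sub [CComp c_drop [CComp CSucc [CComp CSucc [CComp c_dbl [CMu c_P]]]; CProj 0];
     CComp c_mul [CComp c_pow2 [CComp c_Ls [CMu c_P; CProj 0]]; CComp c_drop [CComp c_Ls [CMu c_P; CProj 0];
     CComp c_drop [CComp CSucc [CComp CSucc [CComp c_dbl [CMu c_P]]]; CProj 0]]]]) [N] (enc y)).
 { eapply comp2; [apply HR| |].
   - eapply comp2; [|apply HP|apply mul_ok]. eapply comp1; [apply HL|apply pow2_ok].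
   - replace (enc y) with (enc (y ++ p') - 2 ^ length y * enc p'). apply sub_ok. rewrite enc_app; lia. }
 unfold M. cbv zeta. eapply comp2; [apply HY| |].
 - eapply comp2; [| |apply mul_ok]. eapply comp1; [apply HL|apply pow2_ok]. eapply comp2; [apply HP|apply HY|apply HU].
 - rewrite enc_app. apply add_ok.
Qed.
End Mach.
Open Scope R_scope.
Lemma enc_surj L : exists w, enc w = L /\ (2^(length w) <= L+1)%nat.
Proof. induction L as [L IH] using lt_wf_ind. destruct L as [|L]. exists []. simpl; lia.
 pose proof (Nat.div_mod L 2 ltac:(lia)) as E. pose proof (Nat.mod_upper_bound L 2 ltac:(lia)) as E2.
 destruct (IH (L/2)%nat) as [w [H1 H2]]. lia.
 exists ((Nat.eqb (L mod 2) 1) :: w). cbn [enc length]. rewrite Nat.pow_succ_r'.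
 destruct (L mod 2) as [|[|]] eqn:EE; simpl; rewrite ?EE in *; try lia. Qed.

Lemma cw_len w : length (cw w) = (length w + length w + 2)%nat.
Proof. unfold cw, dbl. rewrite length_app. induction w; simpl in *. lia. set (u := length (flat_map _ w)) in *. set (v := length w) in *. lia. Qed.

Lemma seg_len x n1 n2 : length (seg x n1 n2) = (n2 + 1 - n1)%nat.
Proof. unfold seg. rewrite length_map, length_seq. reflexivity. Qed.

Lemma seg_app x S T : (S <= T)%nat -> seg x 1 S ++ seg x (S+1) T = seg x 1 T.
Proof. intro H. unfold seg. rewrite <- map_app. f_equal.
 replace (T+1-1)%nat with (S + (T - S))%nat by lia. rewrite seq_app.
 replace (S + 1 - 1)%nat with S by lia. replace (T + 1 - (S+1))%nat with (T - S)%nat by lia.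
 f_equal. f_equal. lia. Qed.

Lemma nat_above r : exists n : nat, r < INR n.
Proof. destruct (archimed r) as [H _]. exists (Z.to_nat (up r)).
 destruct (Z_le_gt_dec 0 (up r)).
 - rewrite INR_IZR_INZ, Z2Nat.id by lia; lra.
 - replace (Z.to_nat (up r)) with 0%nat by lia. simpl. assert (g2 : (up r < 0)%Z) by lia. apply IZR_lt in g2. simpl in g2. lra. Qed.

Lemma tau_le1 U1 x tau : universal1 U1 -> has_rate U1 x tau -> tau <= 1.
Proof. intros hU [N HN]. destruct (hU (CProj 0)) as [c0 Hc0].
 destruct (Rle_or_lt tau 1) as [|Hgt]; auto. exfalso.
 destruct (nat_above (INR c0 / (tau - 1))) as [n0 Hn0].
 set (n := Nat.max N n0).
 assert (Hr : runs1 (CProj 0) (seg x 1 n) (seg x 1 n)) by (apply proj_ok; simpl; lia).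
 destruct (Hc0 _ _ Hr) as [q [Hq1 Hq2]]. pose proof (HN n ltac:(lia) q Hq1) as Hk.
 rewrite seg_len in Hq2. apply le_INR in Hq2. rewrite plus_INR in Hq2.
 replace (n + 1 - 1)%nat with n in Hq2 by lia.
 assert (INR n0 <= INR n) by (apply le_INR; lia).
 assert (INR c0 < (tau - 1) * INR n0).
 { apply (Rmult_lt_compat_l (tau-1)) in Hn0; [|lra]. field_simplify in Hn0; lra. }
 nra. Qed.

Lemma sq_le_pow m : (4 <= m)%nat -> (m*m <= 2^m)%nat.
Proof. induction m; intro H. lia. destruct (Nat.eq_dec m 3). subst; simpl; lia.
 assert (H4 : (4 <= m)%nat) by lia. specialize (IHm H4). rewrite Nat.pow_succ_r'. nia. Qed.

Lemma divpos a d : 0 <= a -> 0 < d -> 0 <= a / d.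
Proof. intros. unfold Rdiv. apply Rmult_le_pos; auto. left; apply Rinv_0_lt_compat; auto. Qed.

Lemma aux d C : 0 < d -> exists A : nat, forall T m : nat, (A <= T)%nat -> (2^m <= T+1)%nat ->
  2 * INR m + C < d * INR T.
Proof. intro Hd. destruct (nat_above (4/d)) as [K HK].
 set (M0 := Nat.max K 4).
 destruct (nat_above (1 + 2 * Rabs C / d + (2 * INR M0 + Rabs C) / d)) as [A HA].
 exists A. intros T m HT Hm.
 assert (HAT : INR A <= INR T) by (apply le_INR; lia).
 assert (HdK : 4 < d * INR K).
 { apply (Rmult_lt_compat_l d) in HK; [|lra]. field_simplify in HK; lra. }
 assert (HC1 : d + 2 * Rabs C < d * INR T).
 { assert (1 + 2 * Rabs C / d < INR T) by (pose proof (Rabs_pos C); assert (0 <= (2 * INR M0 + Rabs C)/d) by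
     (apply divpos; [pose proof (pos_INR M0)|]; lra); lra).
   apply (Rmult_lt_compat_l d) in H; [|lra]. field_simplify in H; lra. }
 assert (HC2 : 2 * INR M0 + Rabs C < d * INR T).
 { assert ((2 * INR M0 + Rabs C) / d < INR T) by (pose proof (Rabs_pos C); assert (0 <= 2 * Rabs C/d) by
     (apply divpos; lra); lra).
   apply (Rmult_lt_compat_l d) in H; [|lra]. field_simplify in H; lra. }
 pose proof (Rle_abs C).
 destruct (le_lt_dec M0 m) as [Hmm|Hmm].
 - assert (HKm : (K * m <= T + 1)%nat).
   { pose proof (sq_le_pow m ltac:(lia)). nia. }
   apply le_INR in HKm. rewrite mult_INR, plus_INR in HKm. simpl INR in HKm.
   pose proof (pos_INR m).
   assert (4 * INR m <= d * (INR T + 1)) by nra. lra.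
 - apply lt_INR in Hmm. lra. Qed.

Lemma ln_ge0 r : 1 <= r -> 0 <= ln r.
Proof. intro H. destruct (Req_dec r 1). subst; rewrite ln_1; lra.
 rewrite <- ln_1. left. apply ln_increasing; lra. Qed.

Lemma theta A B d : 1 <= A -> 2 <= B -> exists c1 c2 : R, exists N : nat, 0 < c1 /\ 0 < c2 /\
  forall i, (N <= i)%nat -> c1 * INR i <= ln (A * B^(i-d)) <= c2 * INR i.
Proof. intros HA HB.
 assert (Hl2 : 0 < ln 2) by (rewrite <- ln_1; apply ln_increasing; lra).
 assert (HlB : ln 2 <= ln B).
 { destruct (Req_dec B 2). subst; lra. left; apply ln_increasing; lra. }
 pose proof (ln_ge0 A HA) as HlA.
 exists (ln 2 / 2), (ln A + ln B + 1), (2*d+1)%nat. split. lra. split. lra.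
 intros i Hi. rewrite ln_mult, ln_pow by (try apply pow_lt; lra).
 rewrite minus_INR by lia.
 assert (Hi' : 2 * INR d + 1 <= INR i) by (replace 2 with (INR 2) by reflexivity;
    rewrite <- mult_INR, <- S_INR; apply le_INR; lia).
 pose proof (pos_INR d). split.
 - assert (INR i / 2 <= INR i - INR d) by lra. nra.
 - assert (INR i - INR d <= INR i) by lra. nra. Qed.

Theorem lemma4p2
  (U1 U2 : code) (hU1 : universal1 U1) (hU2 : universal2 U2)
  (x : nat -> bool) (tau sigma sigma' : R) (b : nat)
  (hrate : has_rate U1 x tau) (htau : 0 < tau)
  (hs0 : 0 < sigma) (hs1 : sigma < tau)
  (hs'0 : 0 < sigma') (hs'1 : sigma' < tau - sigma)
  (hb : INR b - 1 < (1 - sigma) / sigma' <= INR b) :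
  exists a0 : nat, forall (a : nat), (a0 <= a)%nat -> (0 < a)%nat ->
  forall t : nat -> nat,
    t 0%nat = 0%nat -> t 1%nat = a ->
    (forall i, (2 <= i)%nat -> t i = (b * list_sum (map t (seq 1 (i - 1))))%nat) ->
    (forall i, (2 <= i)%nat ->
       Kc_gt U2 (seg x (t (i - 1)%nat + 1) (t i)) (seg x 1 (t (i - 1)%nat))
             (sigma * INR (t i - t (i - 1)%nat))) /\
    (exists c1 c2 : R, exists N : nat, 0 < c1 /\ 0 < c2 /\
       forall i, (N <= i)%nat ->
         c1 * INR i <= ln (INR (length (seg x (t (i - 1)%nat + 1) (t i)))) <= c2 * INR i) /\
    (exists c1 c2 : R, exists N : nat, 0 < c1 /\ 0 < c2 /\
       forall i, (N <= i)%nat ->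
         c1 * INR i <= ln (INR (length (seg x 1 (t i)))) <= c2 * INR i).
Proof.
 pose proof (tau_le1 U1 x tau hU1 hrate) as Ht1.
 assert (Hb1 : (1 <= b)%nat).
 { destruct b. simpl in hb. assert (0 < (1 - sigma) / sigma') by (apply Rdiv_lt_0_compat; lra). lra. lia. }
 assert (Hbs : 1 - sigma <= sigma' * INR b).
 { destruct hb as [_ hb2]. apply (Rmult_le_compat_l sigma') in hb2; [|lra].
   field_simplify in hb2; lra. }
 destruct (hU1 (M U2)) as [c Hc].
 destruct hrate as [Nr HNr].
 destruct (aux (tau - sigma - sigma') (INR c + 2) ltac:(lra)) as [A HA].
 exists (Nat.max A Nr). intros a Ha Ha0 t Ht0 Ht1' Hrec.
 assert (Hts : forall j, list_sum (map t (seq 1 (S j))) = (a * (b+1)^j)%nat).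
 { induction j. simpl. lia. rewrite seq_S, map_app, list_sum_app, IHj. simpl.
   rewrite (Hrec (S (S j))) by lia. replace (S (S j) - 1)%nat with (S j) by lia. rewrite IHj. ring. }
 assert (Htt : forall j, t (S (S j)) = (b * (a * (b+1)^j))%nat).
 { intro j. rewrite Hrec by lia. replace (S (S j) - 1)%nat with (S j) by lia. rewrite Hts. reflexivity. }
 assert (Hle : forall j, (t (S j) <= a * (b+1)^j)%nat).
 { intro j. rewrite <- Hts, seq_S, map_app, list_sum_app. simpl. lia. }
 assert (Hpow : forall j, (1 <= (b+1)^j)%nat).
 { intro j. pose proof (Nat.pow_nonzero (b+1) j ltac:(lia)). lia. }
 split; [|split].
 - intros i Hi. destruct i as [|[|j]]; try lia. replace (S (S j) - 1)%nat with (S j) by lia.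
   pose proof (Htt j) as HT. pose proof (Hle j) as HS. pose proof (Hpow j) as HP.
   set (T := t (S (S j))) in *. set (S' := t (S j)) in *.
   assert (HbS : (b * S' <= T)%nat) by (rewrite HT; nia).
   assert (HST : (S' <= T)%nat) by nia.
   assert (HaT : (a <= T)%nat) by (rewrite HT; nia).
   intros p' Hp'.
   destruct (Rlt_or_le (sigma * INR (T - S')) (INR (length p'))) as [|Hle']; auto. exfalso.
   set (y := seg x 1 S'). set (xi := seg x (S'+1) T).
   assert (Hy : length y = S') by (unfold y; rewrite seg_len; lia).
   destruct (enc_surj (length y)) as [w [Hw1 Hw2]].
   pose proof (M_ok U2 w y p' xi Hw1 Hp') as HM.
   destruct (Hc _ _ HM) as [q [Hq1 Hq2]].
   unfold y, xi in Hq1. rewrite seg_app in Hq1 by lia.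
   pose proof (HNr T ltac:(lia) q Hq1) as Hk.
   rewrite !length_app, cw_len, Hy in Hq2.
   apply le_INR in Hq2. rewrite !plus_INR in Hq2. simpl (INR 2) in Hq2.
   rewrite Hy in Hw2.
   pose proof (HA T (length w) ltac:(lia) ltac:(lia)) as HAw.
   rewrite minus_INR in Hle' by lia.
   apply le_INR in HbS. rewrite mult_INR in HbS.
   pose proof (pos_INR S').
   assert ((1 - sigma) * INR S' <= sigma' * INR T).
   { assert ((1 - sigma) * INR S' <= sigma' * INR b * INR S') by (apply Rmult_le_compat_r; lra).
     assert (sigma' * (INR b * INR S') <= sigma' * INR T) by (apply Rmult_le_compat_l; lra). lra. }
   lra.
 - destruct (theta (INR (a*b*b)) (INR (b+1)) 3) as [c1 [c2 [N [Hc1 [Hc2 HN]]]]].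
   { replace 1 with (INR 1) by reflexivity. apply le_INR. nia. }
   { replace 2 with (INR 2) by reflexivity. apply le_INR. lia. }
   exists c1, c2, (Nat.max N 3). split; auto. split; auto. intros i Hi.
   rewrite seg_len. destruct i as [|[|[|k]]]; try lia.
   replace (S (S (S k)) - 1)%nat with (S (S k)) by lia.
   rewrite !Htt. replace (S (S (S k))) with (S (S (S k))) by reflexivity.
   assert (E : (b * (a * (b + 1) ^ S k) + 1 - (b * (a * (b + 1) ^ k) + 1) = a*b*b*(b+1)^(S (S (S k)) - 3))%nat).
   { replace (S (S (S k)) - 3)%nat with k by lia. rewrite Nat.pow_succ_r'.
     assert (b * (a * ((b + 1) * (b + 1) ^ k)) = b * (a * (b + 1) ^ k) + a*b*b*(b+1)^k)%nat by ring. lia. }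
   rewrite E, mult_INR, pow_INR. apply HN. lia.
 - destruct (theta (INR (a*b)) (INR (b+1)) 2) as [c1 [c2 [N [Hc1 [Hc2 HN]]]]].
   { replace 1 with (INR 1) by reflexivity. apply le_INR. nia. }
   { replace 2 with (INR 2) by reflexivity. apply le_INR. lia. }
   exists c1, c2, (Nat.max N 2). split; auto. split; auto. intros i Hi.
   rewrite seg_len. destruct i as [|[|k]]; try lia.
   rewrite Htt. replace (b * (a * (b + 1) ^ k) + 1 - 1)%nat with (a*b*(b+1)^(S (S k) - 2))%nat.
   2: { replace (S (S k) - 2)%nat with k by lia. ring_simplify. lia. }
   rewrite mult_INR, pow_INR. apply HN. lia.
Qed.
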